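(* Let $G$ be a finite soluble group such that $\mathrm{pr}^*(G)\ge\epsilon>0$. If $p$ is a prime with $p>(2/\epsilon)^{6/\epsilon}$, then every Sylow $p$-subgroup of $G$ is contained in $F(G)$.
   Context: For subsets $X,Y$ of a finite group, $\Pr(X,Y)=|\{(x,y)\in X\times Y: xy=yx\}|/(|X||Y|)$. $\mathrm{pr}^*(G)$ is the maximum real number $\epsilon$ such that for every pair of distinct primes $p,q$ dividing $|G|$ there exist a Sylow $p$-subgroup $P$ and a Sylow $q$-subgroup $Q$ of $G$ with $\Pr(P,Q)\ge\epsilon$. $F(G)$ is the Fitting subgroup of $G$. *)

(* Defs.v *)
From HB Require Import structures.
From mathcomp Require Import all_boot all_order all_algebra all_fingroup all_solvable.
From mathcomp Require Import reals exp.
Set Implicit Arguments. Unset Strict Implicit. Unset Printing Implicit Defensive.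
Import Order.TTheory GRing.Theory Num.Theory.
Local Open Scope ring_scope.
Local Open Scope group_scope.

Definition commPr (R : realType) (gT : finGroupType) (X Y : {set gT}) : R :=
  (#|[set xy in setX X Y | (xy.1 * xy.2)%g == (xy.2 * xy.1)%g]|%:R /
   (#|X| * #|Y|)%:R)%R.

(* pr*(G) >= eps : since pr*(G) is the maximum eps' such that for all distinct
   primes p, q dividing |G| there are Sylow subgroups P, Q with Pr(P,Q) >= eps',
   pr*(G) >= eps holds exactly when this condition holds at eps. *)
Definition prstar_ge (R : realType) (gT : finGroupType) (G : {group gT}) (eps : R) : Prop :=
  forall p q : nat, prime p -> prime q -> p != q -> (p %| #|G|)%N -> (q %| #|G|)%N ->
    exists P Q : {group gT},
      [/\ P \in 'Syl_p(G), Q \in 'Syl_q(G) & (eps <= commPr R P Q)%R].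

(* Main.v *)
Require Import Defs.
From HB Require Import structures.
From mathcomp Require Import all_boot all_order all_algebra all_fingroup all_solvable.
From mathcomp Require Import reals exp.
From mathcomp Require Import lra ring.
Import Order.TTheory GRing.Theory Num.Theory.
Local Open Scope group_scope.
From mathcomp Require Import zify.

Section Count.
Variable gT : finGroupType.
Implicit Types X Y : {group gT}.

Lemma card_comm X Y :
  #|[set xy in setX X Y | (xy.1 * xy.2)%g == (xy.2 * xy.1)%g]| =
  (\sum_(y in Y) #|'C_X[y]|)%N.
Proof.
rewrite -sum1_card.
rewrite (eq_bigl (fun u => (u.1 \in X) && ((u.2 \in Y) && (u.1 * u.2 == u.2 * u.1)))); last first.
  by move=> [x y]; rewrite !inE /= andbA.
rewrite -(pair_big_dep (fun x => x \in X) (fun x y => (y \in Y) && (x * y == y * x)) (fun _ _ => 1%N)) /=.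
rewrite (exchange_big_dep (fun y => y \in Y)) /=; last by move=> x y _ /andP[].
apply: eq_bigr => y Yy; rewrite -sum1_card; apply: eq_bigl => x.
rewrite in_set /= Yy /=; congr (_ && _); apply/eqP/cent1P => h; exact: h.
Qed.

Lemma comm_bound X Y p : prime p -> p.-group X ->
  (p * \sum_(y in Y) #|'C_X[y]| <= p * (#|X| * #|'C_Y(X)|) + #|X| * #|Y|)%N.
Proof.
move=> pr_p pX.
have ->: (p * (#|X| * #|'C_Y(X)|) + #|X| * #|Y| =
   \sum_(y in Y) (p * #|X| * (y \in 'C_Y(X)) + #|X|))%N.
  rewrite big_split /= -big_distrr /= sum_nat_const mulnA [(#|Y| * _)%N]mulnC.
  congr (_ * _ + _)%N.
  rewrite -big_mkcondr /= sum1dep_card /=.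
  by apply: eq_card => y; rewrite !inE; apply/idP/andP=> [/andP[]|[]] // ->.
rewrite big_distrr /=; apply: leq_sum => y Yy.
case: (boolP (y \in 'C_Y(X))) => Cy.
  by rewrite muln1 (leq_trans _ (leq_addr _ _)) // leq_mul2l subset_leq_card ?subsetIl ?orbT.
rewrite /= muln0 add0n.
have sCX : 'C_X[y] \subset X by rewrite subsetIl.
have neq : 'C_X[y] != X.
  apply: contra Cy => /eqP eqCX; rewrite inE Yy /=.
  by rewrite -sub_cent1 -eqCX subsetIr.
have := Lagrange sCX => <-.
rewrite mulnC leq_mul2l; apply/orP; right.
have pi : p.-nat #|X : 'C_X[y]| by apply: pnat_dvd (pX); rewrite dvdn_indexg.
have gt1 : (1 < #|X : 'C_X[y]|)%N.
  rewrite indexg_gt1; apply: contra neq => sXC.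
  by rewrite eqEsubset sCX sXC.
move: gt1; have [k ->] := p_natP pi; case: k => [|k] //= _.
by rewrite expnS leq_pmulr // expn_gt0 prime_gt0.
Qed.
End Count.

Section Real.
Variables (R : realType) (gT : finGroupType).
Implicit Types X Y : {group gT}.

Lemma commPr_le1 X Y (eps : R) : (eps <= commPr R X Y)%R -> (eps <= 1)%R.
Proof.
move=> h; apply: (le_trans h); rewrite /commPr.
have pos : (0 < (#|X| * #|Y|)%:R :> R)%R by rewrite ltr0n muln_gt0 !cardG_gt0.
rewrite ler_pdivrMr // mul1r ler_nat -cardsX.
by apply: subset_leq_card; apply/subsetP => u; rewrite inE => /andP[].
Qed.

Lemma small_index X Y p (eps : R) : prime p -> p.-group X ->
  (eps <= commPr R X Y)%R -> (2 < p%:R * eps)%R -> (#|Y : 'C_Y(X)| < p)%N.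
Proof.
move=> pr_p pX h h2.
have E2 := @comm_bound _ X Y p pr_p pX; rewrite -card_comm in E2.
move: h; rewrite /commPr.
set s := #|_|.
have cxp := cardG_gt0 X; have cp := cardG_gt0 ('C_Y(X)).
have E3 := Lagrange (subsetIl Y 'C(X)).
set m := #|Y : _|  in E3 *; set c := #|_| in E3 cp E2 *.
rewrite -E3 in E2 *.
have pos : (0 < (#|X| * (c * m))%:R :> R)%R.
  by rewrite ltr0n E3 muln_gt0 cxp cardG_gt0.
rewrite ler_pdivlMr // !natrM => E1.
rewrite -/s -(ler_nat R) !natrD !natrM in E2.
rewrite ltnNge; apply/negP => hm; move: hm; rewrite -(ler_nat R) => hm.
set x := (#|X|%:R : R)%R in E1 E2; set cr := (c%:R : R)%R in E1 E2.
set mr := (m%:R : R)%R in E1 E2 hm; set pr := (p%:R : R)%R in E2 h2 hm.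
have xcr : (0 < x * cr)%R by rewrite mulr_gt0 // ltr0n.
have H2 : (pr*(eps*(x*(cr*mr))) <= pr * s%:R)%R.
  by rewrite ler_wpM2l ?ler0n.
have H4 : ((x*cr)*(pr*eps*mr) <= (x*cr)*(pr+mr))%R.
  have -> : ((x*cr)*(pr*eps*mr) = pr*(eps*(x*(cr*mr))))%R by ring.
  have -> : ((x*cr)*(pr+mr) = pr*(x*cr) + x*(cr*mr))%R by ring.
  exact: le_trans H2 E2.
rewrite ler_pM2l // in H4.
have pp : (0 < pr)%R by rewrite ltr0n prime_gt0.
move: H4 h2 hm pp; clearbody pr mr; clear; move=> H4 h2 hm pp; nra.
Qed.
End Real.

Lemma eps_p (R : realType) (eps : R) (p : nat) : (0 < eps)%R -> (eps <= 1)%R ->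
  (powR (2 / eps) (6 / eps) < (p%:R : R))%R -> (2 < p%:R * eps)%R.
Proof.
move=> e0 e1 h.
have h1 : (1 <= 2 / eps)%R by rewrite ler_pdivlMr // mul1r; lra.
have h6 : (1 <= 6 / eps)%R by rewrite ler_pdivlMr // mul1r; lra.
have := le_lt_trans (le1r_powR h1 h6) h.
by rewrite ltr_pdivrMr.
Qed.

Lemma bound_a (R : realType) (gT : finGroupType) (G : {group gT}) (eps : R) (p : nat)
  (P : {group gT}) r :
  (0 < eps)%R -> prstar_ge G eps -> prime p -> (p %| #|G|)%N ->
  (powR (2 / eps) (6 / eps) < (p%:R : R))%R -> p.-Sylow(G) P ->
  prime r -> r != p -> (r %| #|G|)%N ->
  forall a, r.-nat a -> (a %| #|G : 'N_G(P)|)%N -> (a < p)%N.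
Proof.
move=> e0 hpr pr_p pG hp sylP pr_r rp rG a ra ha.
have pr' : p != r by rewrite eq_sym.
have [P' [Q' [sylP' sylQ' he]]] := hpr p r pr_p pr_r pr' pG rG.
rewrite inE in sylP'; rewrite inE in sylQ'.
have e1 := @commPr_le1 R gT _ _ _ he.
have h2 := @eps_p R eps p e0 e1 hp.
have pP' := pHall_pgroup sylP'.
have mp := @small_index R gT P' Q' p eps pr_p pP' he h2.
rewrite -(card_Syl sylP) (card_Syl sylP') in ha.
set C := 'C_Q'(P').
have sCN : C \subset 'N_G(P').
  rewrite subsetI (subset_trans (subsetIl _ _) (pHall_sub sylQ')) /=.
  exact: subset_trans (subsetIr _ _) (cent_sub _).
have hd : (a * #|C| %| #|G|)%N.
  rewrite -(Lagrange (subsetIl G 'N(P'))) mulnC; apply: dvdn_mul => //.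
  exact: cardSg.
have rC : r.-nat (a * #|C|)%N.
  by rewrite pnatM ra; apply: pgroupS (subsetIl _ _) (pHall_pgroup sylQ').
have := partn_dvd r (cardG_gt0 G) hd.
rewrite part_pnat_id // -(card_Hall sylQ') -(Lagrange (subsetIl Q' 'C(P'))) -/C.
move/dvdn_leq; rewrite muln_gt0 cardG_gt0 indexg_gt0 /= => /(_ isT).
rewrite [(#|C| * _)%N]mulnC leq_mul2r.
case/orP=> [|ha']; first by rewrite eqn0Ngt cardG_gt0.
exact: leq_ltn_trans ha' mp.
Qed.

Lemma step (gT : finGroupType) (G K L P : {group gT}) p r :
  prime p -> prime r -> p.-Sylow(G) P -> K <| G -> L <| G -> K \subset L ->
  r.-nat #|L : K| -> G \subset 'N(P <*> L) ->
  (r != p -> (r %| #|G|)%N -> forall a, r.-nat a -> (a %| #|G : 'N_G(P)|)%N -> (a < p)%N) ->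
  G \subset 'N(P <*> K).
Proof.
move=> pr_p pr_r sylP /andP[sKG nKG] /andP[sLG nLG] sKL rKL nPL hb.
have sPG := pHall_sub sylP.
set N := 'N_G(P <*> K).
have sNPN : 'N_G(P) \subset N.
  rewrite subsetI subsetIl /=.
  exact: normsY (subsetIr _ _) (subset_trans (subsetIl _ _) nKG).
have sPNP : P \subset 'N_G(P) by rewrite subsetI sPG normG.
have sPLG : P <*> L \subset G by rewrite join_subG sPG.
have nsPL : P <*> L <| G by rewrite /normal sPLG.
have sylPL : p.-Sylow(P <*> L) P := pHall_subl (joing_subl _ _) sPLG sylP.
have defG := Frattini_arg nsPL sylPL.
have sNG : N \subset G := subsetIl _ _.
have nLN : N \subset 'N(L) := subset_trans sNG nLG.
have eG : (G : {set gT}) = N * L.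
  apply/eqP; rewrite eqEsubset mul_subG // andbT -(norm_joinEl nLN).
  rewrite -{1}defG mul_subG // ?join_subG ?joing_subr ?andbT.
    exact: subset_trans (subset_trans sPNP sNPN) (joing_subl _ _).
  exact: subset_trans sNPN (joing_subl _ _).
have sKN : K \subset N.
  by rewrite subsetI sKG (subset_trans (joing_subr P K) (normG _)).
have sKNL : K \subset N :&: L by rewrite subsetI sKN.
set a := #|G : N|.
have adiv : (a %| #|L : K|)%N.
  have h1 := mul_cardG N L; rewrite -eG in h1.
  have h2 := Lagrange sNG; rewrite -/a in h2.
  have h3 := Lagrange sKNL; have h4 := Lagrange sKL.
  rewrite -h2 -h3 -h4 in h1.
  have h5 : (a * #|N :&: L : K| = #|L : K|)%N.
    apply/eqP; rewrite -(eqn_pmul2l (cardG_gt0 N)) -(eqn_pmul2l (cardG_gt0 K)).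
    apply/eqP; rewrite [RHS]mulnCA h1 /=; ring.
  by rewrite -h5 dvdn_mulr.
have ra : r.-nat a := pnat_dvd adiv rKL.
have sPN : P \subset N := subset_trans sPNP sNPN.
have sylPN : p.-Sylow(N) P := pHall_subl sPN sNG sylP.
have eNN : 'N_N(P) = 'N_G(P).
  apply/eqP; rewrite eqEsubset; apply/andP; split; first exact: setSI sNG.
  by rewrite subsetI sNPN subsetIr.
have amod : (a %% p = 1)%N.
  have h1 : (a * #|'Syl_p(N)| = #|'Syl_p(G)|)%N.
    by rewrite (card_Syl sylPN) eNN (card_Syl sylP); exact: Lagrange_index sNG sNPN.
  have m1 := card_Syl_mod G pr_p; have m2 := card_Syl_mod N pr_p.
  by rewrite -h1 -modnMm m2 muln1 modn_mod in m1.
have a1 : a = 1%N.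
  have [k ak] := p_natP ra.
  case: k ak => [|k] ak; first by [].
  have rdiv : (r %| a)%N by rewrite ak expnS dvdn_mulr.
  case: (eqVneq r p) => [erp|nrp].
    by move: amod; rewrite ak expnS erp modnMr.
  have aG : (a %| #|G : 'N_G(P)|)%N.
    by rewrite -(Lagrange_index sNG sNPN) dvdn_mulr.
  have rG : (r %| #|G|)%N.
    by apply: dvdn_trans rdiv _; apply: dvdn_indexg.
  have := hb nrp rG a ra aG => alt.
  by rewrite modn_small in amod.
have : G \subset N by rewrite -indexg_eq1 -/a a1.
by move/subset_trans; apply; apply: subsetIr.
Qed.

Lemma exists_L (gT : finGroupType) (G K : {group gT}) : solvable G -> K <| G -> K :!=: G ->
  exists r, exists L : {group gT}, [/\ prime r, L <| G, K \proper L & r.-nat #|L : K|].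
Proof.
move=> solG nsKG neKG.
have [sKG nKG] := andP nsKG.
have solQ : solvable (G / K) := quotient_sol K solG.
have ntQ : G / K :!=: 1.
  apply: contra neKG => /eqP e.
  have : G / K \subset [1] by rewrite e.
  by rewrite quotient_sub1 // => sGK; rewrite eqEsubset sKG sGK.
have [H [sHQ nsHQ ntH abH]] := solvable_norm_abelem solQ (normal_refl _) ntQ.
have [r pr_r /abelem_pgroup rH] := is_abelemP abH.
exists r, (coset K @*^-1 H)%G; split => //.
- by rewrite -(quotientGK nsKG) cosetpre_normal.
- rewrite properEneq sub_cosetpre andbT; apply: contra ntH => /eqP e.
  by rewrite -(cosetpreK H) -e trivg_quotient.
- have sLG : coset K @*^-1 H \subset G.
    by rewrite -(quotientGK nsKG) cosetpreSK.
  rewrite -card_quotient ?(subset_trans sLG nKG) //= cosetpreK.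
  exact: rH.
Qed.

Theorem lemma4p5 (R : realType) (gT : finGroupType) (G : {group gT}) (eps : R) (p : nat) :
  solvable G -> (0 < eps)%R -> prstar_ge G eps -> prime p ->
  (powR (2 / eps) (6 / eps) < (p%:R : R))%R ->
  forall P : {group gT}, P \in 'Syl_p(G) -> (P \subset 'F(G))%g.
Proof.
move=> solG e0 hpr pr_p hp P; rewrite inE => sylP.
have sPG := pHall_sub sylP.
case: (boolP (p %| #|G|)%N) => pG; last first.
  have [k hk] := p_natP (pHall_pgroup sylP).
  case: k hk => [|k] hk.
    have /eqP -> : P :==: 1 by rewrite trivg_card1 hk.
    exact: sub1G.
  by case/negP: pG; apply: dvdn_trans (cardSg sPG); rewrite hk expnS dvdn_mulr.
suff IH : forall n (K : {group gT}), (#|G| - #|K| < n)%N -> K <| G -> G \subset 'N(P <*> K).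
  have := IH (#|G| - #|[1 gT]%G|).+1 [1 gT]%G (ltnSn _) (normal1 G).
  rewrite joingG1 => nPG.
  by apply: Fitting_max (pgroup_nil (pHall_pgroup sylP)); rewrite /normal sPG.
elim=> [|n IHn] K // hn nsKG.
case: (eqVneq K G) => [->|neKG].
  by rewrite (joing_idPr sPG) normG.
have [r [L [pr_r nsLG pKL rLK]]] := @exists_L gT G K solG nsKG neKG.
have hL : (#|G| - #|L| < n)%N.
  have := proper_card pKL; have := subset_leq_card (normal_sub nsLG).
  have := subset_leq_card (normal_sub nsKG). move: hn; clear; move: #|G| #|K| #|L| => g k l; lia.
have nPL := IHn L hL nsLG.
apply: (@step gT G K L P p r pr_p pr_r sylP nsKG nsLG (proper_sub pKL) rLK nPL).
move=> rp rG a ra ha.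
exact: (@bound_a R gT G eps p P r e0 hpr pr_p pG hp sylP pr_r rp rG a ra ha).
Qed.
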